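(* Let $lc_n$ be the number of linked cycles on $[n]$. Then $lc_1=1$, $lc_2=2$, and for all $n\ge3$, $$lc_n=(2n-3)lc_{n-1}+lc_{n-2}.$$
   Context: Two finite sets of integers $E,F$ are nearly disjoint if for every $i\in E\cap F$ either ($i=\min(E)$, $|E|>1$, $i\ne\min(F)$) or ($i=\min(F)$, $|F|>1$, $i\ne\min(E)$). A linked partition of $[n]$ is a set of nonempty subsets (blocks) of $[n]$ with union $[n]$, any two distinct blocks nearly disjoint. A linked cycle on $[n]$ is a linked partition of $[n]$ together with a cyclic arrangement of the elements of each block. *)

(* Defs.v *)
(* [n] = {1,...,n} is represented by 'I_n = {0,...,n-1}
   (order-preserving relabelling i |-> i+1, so minima are preserved). *)
From mathcomp Require Import all_boot all_fingroup.
Set Implicit Arguments. Unset Strict Implicit. Unset Printing Implicit Defensive.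

Section LinkedCycles.
Variable n : nat.
Local Notation T := 'I_n.

Definition is_min (i : T) (E : {set T}) : bool :=
  (i \in E) && [forall j in E, i <= j].

Definition nearly_disjoint (E F : {set T}) : bool :=
  [forall i in E :&: F,
     [&& is_min i E, 1 < #|E| & ~~ is_min i F] ||
     [&& is_min i F, 1 < #|F| & ~~ is_min i E]].

Definition linked_partition (P : {set {set T}}) : bool :=
  [&& set0 \notin P,
      \bigcup_(B in P) B == [set: T] &
      [forall E in P, forall F in P, (E != F) ==> nearly_disjoint E F]].

(* a cyclic arrangement of the (nonempty) block B, encoded as a permutation
   of [n] fixing everything outside B and acting as one cycle on B *)
Definition cyclic_arrangement (B : {set T}) (s : {perm T}) : bool :=
  [forall x, (x \notin B) ==> (s x == x)] &&
  [forall x in B, forall y in B, y \in porbit s x].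

Definition linked_cycle (P : {set {set T}}) (c : {ffun {set T} -> {perm T}})
  : bool :=
  linked_partition P &&
  [forall B, if B \in P then cyclic_arrangement B (c B) else c B == 1%g].

End LinkedCycles.

Definition lc (n : nat) : nat :=
  #|[set x : {set {set 'I_n}} * {ffun {set 'I_n} -> {perm 'I_n}}
        | linked_cycle x.1 x.2]|.

(* Main.v *)
Require Import Defs.
From mathcomp Require Import all_boot all_fingroup ssralg ssrnum ssrint poly.
From mathcomp Require Import ring.
Set Implicit Arguments. Unset Strict Implicit. Unset Printing Implicit Defensive.


Section Cyc.
Variable n : nat.
Local Notation T := 'I_n.
Implicit Types (B : {set T}) (s : {perm T}).
Local Open Scope group_scope.

Lemma cycP B s : reflect ((forall x, x \notin B -> s x = x) /\
   (forall x y, x \in B -> y \in B -> y \in porbit s x)) (cyclic_arrangement B s).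
Proof.
apply: (iffP andP) => [[/forallP H1 /forall_inP H2]|[H1 H2]]; split.
- by move=> x xB; apply/eqP; move/implyP: (H1 x); apply.
- by move=> x y xB yB; move/forall_inP: (H2 x xB); apply.
- by apply/forallP => x; apply/implyP => xB; rewrite H1.
- by apply/forall_inP => x xB; apply/forall_inP => y yB; apply: H2.
Qed.

Lemma porbit_step s x y : y \in porbit s x -> s y \in porbit s x.
Proof. by case/porbitP=> i ->; rewrite -permM -expgSr mem_porbit. Qed.

Lemma porbit_trans s x y w : y \in porbit s x -> w \in porbit s y -> w \in porbit s x.
Proof. by rewrite -eq_porbit_mem => /eqP <-. Qed.

Lemma cyc_stable B s x : cyclic_arrangement B s -> x \in B -> s x \in B.
Proof.
case/cycP=> H1 _ xB; apply: contraT => sxB.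
have := H1 _ sxB => /perm_inj eq; by rewrite -eq in xB; rewrite xB in sxB.
Qed.

Lemma cyc_stableX B s x i : cyclic_arrangement B s -> x \in B -> (s ^+ i) x \in B.
Proof.
move=> cB xB; elim: i => [|i IH]; first by rewrite expg0 perm1.
by rewrite expgSr permM; apply: cyc_stable.
Qed.

Lemma cyc_le1 B : #|B| <= 1 -> cyclic_arrangement B 1.
Proof.
move/card_le1_eqP => H; apply/cycP; split => [x _|x y xB yB]; first by rewrite perm1.
by rewrite (H _ _ yB xB) porbit_id.
Qed.

Lemma cyc_single m s : cyclic_arrangement [set m] s -> s = 1.
Proof.
move=> cB; apply/permP => x; rewrite perm1.
case: (eqVneq x m) => [->|xm].
  by have := cyc_stable cB (set11 m); rewrite inE => /eqP.
by case/cycP: cB => H1 _; apply: H1; rewrite inE.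
Qed.

Lemma cyc_ins B s z a : cyclic_arrangement B s -> z \notin B -> a \in B ->
  cyclic_arrangement (z |: B) (s * tperm z (s a)).
Proof.
move=> cB zB aB; set u := s a; set s' := s * tperm z u.
have uB : u \in B by apply: cyc_stable.
have uz : u != z by apply: contraNneq zB => <-.
have s'E x : s' x = tperm z u (s x) by rewrite permM.
have A i : (s ^+ i) u \in porbit s' u.
  elim: i => [|i IH]; first by rewrite expg0 perm1 porbit_id.
  rewrite expgSr permM; set w := (s ^+ i) u in IH *.
  case: (eqVneq w a) => [->|wa]; first by rewrite porbit_id.
  have wB : w \in B by apply: cyc_stableX.
  have swB : s w \in B by apply: cyc_stable.
  have : s' w = s w.
    rewrite s'E tpermD //; first by apply: contraNneq zB => ->.
    by apply: contra_neq wa => /perm_inj.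
  by move <-; apply: porbit_step.
have Bin x : x \in B -> x \in porbit s' u.
  by case/cycP: cB => _ H2 xB; case/porbitP: (H2 u x uB xB) => i ->.
have zin : z \in porbit s' u.
  have : s' a = z by rewrite s'E tpermR.
  by move <-; apply: porbit_step; apply: Bin.
have all x : x \in z |: B -> x \in porbit s' u.
  by case/setU1P => [->|]; [|apply: Bin].
apply/cycP; split.
  move=> x; rewrite inE negb_or => /andP[xz xB].
  rewrite inE in xz; have zx : z != x by rewrite eq_sym.
  have ux : u != x by apply: contraNneq xB => <-.
  case/cycP: cB => H1 _; rewrite s'E H1 //; exact: tpermD.
move=> x y xB yB; apply: (porbit_trans (y := u)); last exact: all.
by rewrite porbit_sym; apply: all.
Qed.

Lemma cyc_rem B s z : cyclic_arrangement B s -> z \in B ->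
  cyclic_arrangement (B :\ z) (s * tperm z (s z)).
Proof.
move=> cB zB; set u := s z; set t := s * tperm z u.
have uB : u \in B by apply: cyc_stable.
have tE x : t x = tperm z u (s x) by rewrite permM.
apply/cycP; split.
  move=> x; rewrite !inE negb_and negbK => /orP[/eqP ->|xB].
    by rewrite tE tpermR.
  case/cycP: cB => H1 _; rewrite tE H1 // tpermD //.
    by apply: contraNneq xB => <-.
  by apply: contraNneq xB => <-.
move=> x y; rewrite !inE => /andP[xz xB] /andP[yz yB].
set a := s^-1 z.
have sa : s a = z by rewrite permKV.
pose Inv w := ((w != z) && (w \in porbit t x)) || ((w == z) && (a \in porbit t x)).
have IH i : Inv ((s ^+ i) x).
  elim: i => [|i]; first by rewrite expg0 perm1 /Inv xz porbit_id.
  rewrite expgSr permM; set w := (s ^+ i) x.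
  case/orP=> [/andP[wz wt]|/andP[/eqP wz aT]].
    case: (eqVneq w a) => [wa|wa].
      by rewrite /Inv wa sa eqxx -wa wt orbT.
    have swz : s w != z by apply: contra_neq wa => swz; rewrite /a -swz permK.
    have swu : s w != u by apply: contra_neq wz => /perm_inj.
    have : t w = s w by rewrite tE tpermD // eq_sym.
    by move=> tw; rewrite /Inv swz -tw porbit_step.
  rewrite wz -/u /Inv.
  case: (eqVneq u z) => [->|uz]; first by rewrite /= aT.
  have : t a = u by rewrite tE sa tpermL.
  by move <-; rewrite porbit_step.
case/cycP: cB => _ H2; case/porbitP: (H2 x y xB yB) => i yE.
by move: (IH i); rewrite -yE /Inv (negbTE yz) /= orbF.
Qed.

Lemma cyc_fix B s x y : cyclic_arrangement B s -> x \in B -> y \in B -> x != y -> s x != x.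
Proof.
case/cycP=> _ H2 xB yB xy; apply/eqP => sx.
have : forall i, (s ^+ i) x = x.
  by elim=> [|i IH]; rewrite ?expg0 ?perm1 // expgSr permM IH.
case/porbitP: (H2 x y xB yB) => i yE /(_ i); rewrite -yE => e.
by rewrite e eqxx in xy.
Qed.

End Cyc.


Section LC.
Variable n : nat.
Local Notation T := 'I_n.
Local Notation Y := ({set {set T}} * {ffun {set T} -> {perm T}})%type.
Implicit Types (B E F X : {set T}) (P : {set {set T}}) (y : Y) (a i j m : T).

Definition lck (k : nat) y :=
  [&& set0 \notin y.1, \bigcup_(B in y.1) B == [set i : T | i < k],
      [forall E in y.1, forall F in y.1, (E != F) ==> nearly_disjoint E F] &
      [forall B, if B \in y.1 then cyclic_arrangement B (y.2 B) else y.2 B == 1%g]].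

Lemma lckP k y : reflect
  [/\ set0 \notin y.1, (forall B i, B \in y.1 -> i \in B -> i < k),
      (forall i : T, i < k -> exists2 B, B \in y.1 & i \in B),
      (forall E F, E \in y.1 -> F \in y.1 -> E != F -> nearly_disjoint E F) &
      (forall B, if B \in y.1 then is_true (cyclic_arrangement B (y.2 B)) else y.2 B = 1%g)]
  (lck k y).
Proof.
apply: (iffP and4P) => [[H0 /eqP H1 /forall_inP H2 /forallP H3]|[H0 H1 H2 H3 H4]]; split => //.
- move=> B i BP iB; have : i \in \bigcup_(B in y.1) B by apply/bigcupP; exists B.
  by rewrite H1 inE.
- move=> i ik; have : i \in [set i : T | i < k] by rewrite inE.
  by rewrite -H1 => /bigcupP[B BP iB]; exists B.
- by move=> E F EP FP EF; move/forall_inP: (H2 E EP) => /(_ F FP) /implyP; apply.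
- by move=> B; move: (H3 B); case: ifP => // _ /eqP.
- apply/eqP/setP => i; rewrite inE; apply/bigcupP/idP => [[B BP iB]|/H2 //].
  exact: H1 iB.
- by apply/forall_inP => E EP; apply/forall_inP => F FP; apply/implyP; apply: H3.
- by apply/forallP => B; move: (H4 B); case: ifP => // _ ->.
Qed.

Lemma ndP E F : reflect (forall i, i \in E -> i \in F ->
     [&& is_min i E, 1 < #|E| & ~~ is_min i F] ||
     [&& is_min i F, 1 < #|F| & ~~ is_min i E]) (nearly_disjoint E F).
Proof.
apply: (iffP forall_inP) => [H i iE iF|H i]; first by apply: H; rewrite inE iE iF.
by rewrite inE => /andP[iE iF]; apply: H.
Qed.

Lemma nd_sym E F : nearly_disjoint E F = nearly_disjoint F E.
Proof.
by apply/ndP/ndP => H i iE iF; rewrite orbC; apply: H.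
Qed.

Lemma is_minP i E : reflect (i \in E /\ forall j, j \in E -> i <= j) (is_min i E).
Proof.
apply: (iffP andP) => [[iE /forall_inP H]|[iE H]]; split => //.
by apply/forall_inP.
Qed.

Lemma is_min_uniq i j E : is_min i E -> is_min j E -> i = j.
Proof.
case/is_minP => iE Hi /is_minP[jE Hj]; apply/val_inj/anti_leq.
by rewrite Hi // Hj.
Qed.

Lemma is_min_ex E : E != set0 -> exists m, is_min m E.
Proof.
case/set0Pn => x xE.
case: (@arg_minnP _ x (fun i => i \in E) (fun i : T => val i) xE) => m mE Hm.
by exists m; apply/is_minP; split.
Qed.

Lemma is_min1 a : is_min a [set a].
Proof. by apply/is_minP; split => [|j]; rewrite ?set11 // inE => /eqP ->. Qed.

Lemma is_minU (z i : T) B : (forall j, j \in B -> j < z) -> B != set0 ->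
  is_min i (z |: B) = is_min i B.
Proof.
move=> Bz B0; apply/is_minP/is_minP => [[]|[iB H]].
  case/setU1P => [->|iB] H.
    case/set0Pn: B0 => j jB; have : z <= j by apply: H; apply/setU1P; right.
    by rewrite leqNgt Bz.
  by split => // j jB; apply: H; apply/setU1P; right.
split; first by apply/setU1P; right.
move=> j /setU1P[->|]; [exact: ltnW (Bz _ iB)|exact: H].
Qed.

Lemma nd_single a F : nearly_disjoint [set a] F -> a \in F -> False.
Proof.
move/ndP => /(_ a (set11 a)) H aF; move: (H aF).
by rewrite is_min1 cards1 /= => /and3P[].
Qed.

Lemma nd_min2 i E F : nearly_disjoint E F -> is_min i E -> is_min i F -> False.
Proof.
move/ndP => H mE mF; move: (H i).
case/is_minP: (mE) => iE _; case/is_minP: (mF) => iF _.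
by move/(_ iE iF); rewrite mE mF /= !andbF.
Qed.

End LC.


Section Ext.
Variable n : nat.
Local Notation T := 'I_n.
Local Notation Y := ({set {set T}} * {ffun {set T} -> {perm T}})%type.
Implicit Types (B E F X : {set T}) (P : {set {set T}}) (y : Y) (a i j m : T).
Variable z : T.
Local Notation k := (nat_of_ord z).

Definition child P j := [exists B in P, (j \in B) && ~~ is_min j B].
Definition nch P := #|[set j | child P j]|.
Definition Bown P a := odflt [set a] [pick B in P | is_min a B].
Definition Bpar P a := odflt set0 [pick B in P | (a \in B) && ~~ is_min a B].
Definition ins y B a : Y :=
  ((y.1 :\ B) :|: [set z |: B],
   [ffun X => if X == z |: B then (y.2 B * tperm z (y.2 B a))%g
              else if X == B then 1%g else y.2 X]).
Definition ext y (ch : option (T * bool)) : Y :=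
  match ch with
  | None => (y.1 :|: [set [set z]], y.2)
  | Some (a, b) => ins y (if b then Bpar y.1 a else Bown y.1 a) a
  end.
Definition vch y (ch : option (T * bool)) :=
  match ch with None => true | Some (a, b) => if b then child y.1 a else a < z end.
Definition zb P := odflt set0 [pick X in P | z \in X].
Definition res y : Y :=
  let B' := zb y.1 in let B := B' :\ z in
  ((y.1 :\ B') :|: (if (1 < #|B|) || ~~ (B \subset \bigcup_(X in y.1 :\ B') X)
                    then [set B] else set0),
   [ffun X => if X == B then (y.2 B' * tperm z (y.2 B' z))%g
              else if X == B' then 1%g else y.2 X]).

Lemma pick_uniq (U : finType) (p : pred U) (u : U) :
  (forall v, p v = (v == u)) -> [pick v | p v] = Some u.
Proof.
move=> H; case: pickP => [v|/(_ u)]; first by rewrite H => /eqP ->.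
by rewrite H eqxx.
Qed.

Section Valid.
Variable y : Y.
Hypothesis hy : lck k y.

Lemma hy_lt B i : B \in y.1 -> i \in B -> i < z.
Proof. by case/lckP: hy => _ H _ _ _; apply: H. Qed.

Lemma hy_z B : B \in y.1 -> z \notin B.
Proof. by move=> BP; apply/negP => /(hy_lt BP); rewrite ltnn. Qed.

Lemma hy_0 B : B \in y.1 -> B != set0.
Proof. by case/lckP: hy => H _ _ _ _ BP; apply: contraNneq H => <-. Qed.

Lemma hy_nd E F : E \in y.1 -> F \in y.1 -> E != F -> nearly_disjoint E F.
Proof. by case/lckP: hy => _ _ _ H _; apply: H. Qed.

Lemma hy_cov i : i < z -> exists2 B, B \in y.1 & i \in B.
Proof. by case/lckP: hy => _ _ H _ _; apply: H. Qed.

Lemma hy_c B : if B \in y.1 then is_true (cyclic_arrangement B (y.2 B)) else y.2 B = 1%g.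
Proof. by case/lckP: hy => _ _ _ _ H; apply: H. Qed.

Lemma hy_cyc B : B \in y.1 -> cyclic_arrangement B (y.2 B).
Proof. by move=> BP; move: (hy_c B); rewrite BP. Qed.

Lemma hy_c1 B : B \notin y.1 -> y.2 B = 1%g.
Proof. by move=> BP; move: (hy_c B); rewrite (negbTE BP). Qed.

Definition good B a := a \in B /\ (B \in y.1 \/
   (B = [set a] /\ a < z /\ forall X, X \in y.1 -> a \in X -> ~~ is_min a X)).

Lemma ins_valid B a : good B a -> lck k.+1 (ins y B a).
Proof.
move=> [aB gB].
have Blt i : i \in B -> i < z.
  case: gB => [BP|[-> [az _]]]; first exact: hy_lt.
  by rewrite inE => /eqP ->.
have zB : z \notin B by apply/negP => /Blt; rewrite ltnn.
have B0 : B != set0 by apply/set0Pn; exists a.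
have cardB : 1 < #|z |: B| by rewrite cardsU1 zB add1n ltnS card_gt0.
have cycB : cyclic_arrangement B (y.2 B).
  case: gB => [|[-> [_ H]]]; first exact: hy_cyc.
  rewrite hy_c1 ?cyc_le1 ?cards1 //.
  by apply/negP => /H /(_ (set11 a)); rewrite is_min1.
have ndB F : F \in y.1 -> F != B -> nearly_disjoint (z |: B) F.
  move=> FP FB; apply/ndP => i /setU1P[->|iB iF]; first by rewrite (negbTE (hy_z FP)).
  rewrite is_minU // cardB /=.
  case: gB => [BP|[BE [_ H]]].
    have BF : B != F by rewrite eq_sym.
    move/ndP: (hy_nd BP FP BF) => /(_ i iB iF).
    by case/orP=> /and3P[-> H1 ->]; rewrite ?H1 ?orbT.
  by move: iB iF; rewrite BE inE => /eqP -> aF; rewrite is_min1 (H F FP aF).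
apply/lckP; split.
- apply/negP => /setUP[/setD1P[_ /hy_0/eqP //]|/set1P/setP/(_ z)].
  by rewrite !inE eqxx.
- move=> X i /setUP[/setD1P[_ XP] iX|/set1P -> /setU1P[->|/Blt iz]].
  + exact: ltnW (hy_lt XP iX).
  + exact: ltnSn.
  + exact: ltnW.
- move=> i; rewrite ltnS leq_eqVlt => /orP[/eqP iz|ik].
    exists (z |: B); first by rewrite !inE eqxx orbT.
    by apply/setU1P; left; apply: val_inj.
  case: (hy_cov ik) => X XP iX; case: (eqVneq X B) => [XB|XB].
    by exists (z |: B); [rewrite !inE eqxx orbT|rewrite -XB; apply/setU1P; right].
  by exists X => //; rewrite !inE XB XP.
- move=> E F /setUP[/setD1P[EB EP]|/set1P ->] /setUP[/setD1P[FB FP]|/set1P ->] EF.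
  + exact: hy_nd.
  + by rewrite nd_sym; apply: ndB.
  + exact: ndB.
  + by rewrite eqxx in EF.
- move=> X; rewrite ffunE /=.
  case: (eqVneq X (z |: B)) => [->|XzB].
    by rewrite !inE eqxx orbT; apply: cyc_ins.
  case: (eqVneq X B) XzB => [->|XB] XzB.
    by rewrite !inE eqxx /= (negbTE XzB).
  by rewrite !inE XB (negbTE XzB) orbF /=; apply: hy_c.
Qed.

Lemma Bown_spec a : a < z -> good (Bown y.1 a) a /\ is_min a (Bown y.1 a).
Proof.
move=> az; rewrite /Bown; case: pickP => [B /andP[BP mB]|H] /=.
  by split => //; split; [case/is_minP: mB|left].
split; last exact: is_min1.
split; first exact: set11.
right; split => //; split => // X XP aX.
by move: (H X); rewrite XP /= => ->.
Qed.

Lemma Bpar_spec a : child y.1 a -> good (Bpar y.1 a) a /\ ~~ is_min a (Bpar y.1 a).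
Proof.
move=> ch; rewrite /Bpar; case: pickP => [B /andP[BP /andP[aB mB]]|H] /=.
  by split => //; split => //; left.
by case/exists_inP: ch => B BP aB; move: (H B); rewrite BP aB.
Qed.

Lemma child_lt j : child y.1 j -> j < z.
Proof. by case/exists_inP => B BP /andP[jB _]; apply: hy_lt jB. Qed.

Lemma child_z : ~~ child y.1 z.
Proof. by apply/negP => /child_lt; rewrite ltnn. Qed.

Lemma ext_valid ch : vch y ch -> lck k.+1 (ext y ch).
Proof.
case: ch => [[a b]|].
  rewrite /vch /ext; case: b => H; apply: ins_valid.
    by case: (Bpar_spec H).
  by case: (Bown_spec H).
move=> _; have zP : [set z] \notin y.1 by apply/negP => /hy_z; rewrite set11.
apply/lckP; split.
- rewrite !inE negb_or; apply/andP; split; first by case/lckP: hy.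
  by apply/eqP => /setP/(_ z); rewrite !inE eqxx.
- move=> X i /setUP[XP iX|/set1P -> /set1P ->]; last exact: ltnSn.
  exact: ltnW (hy_lt XP iX).
- move=> i; rewrite ltnS leq_eqVlt => /orP[/eqP iz|ik].
    exists [set z]; first by rewrite !inE eqxx orbT.
    by rewrite inE; apply/eqP/val_inj.
  by case: (hy_cov ik) => X XP iX; exists X => //; rewrite inE XP.
- have ndz F : F \in y.1 -> nearly_disjoint [set z] F.
    move=> FP; apply/ndP => i /set1P -> zF.
    by move: (hy_z FP); rewrite zF.
  move=> E F /setUP[EP|/set1P ->] /setUP[FP|/set1P ->] EF.
  + exact: hy_nd.
  + by rewrite nd_sym; apply: ndz.
  + exact: ndz.
  + by rewrite eqxx in EF.
- move=> X; case: (eqVneq X [set z]) => [->|Xz].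
    by rewrite !inE eqxx orbT hy_c1 // cyc_le1 // cards1.
  by rewrite !inE (negbTE Xz) orbF; apply: hy_c.
Qed.

Lemma child_none j : child (y.1 :|: [set [set z]]) j = child y.1 j.
Proof.
apply/exists_inP/exists_inP => [[X /setUP[XP|/set1P ->] H]|[X XP H]].
- by exists X.
- by case/andP: H => /set1P ->; rewrite is_min1.
- by exists X => //; rewrite inE XP.
Qed.

Lemma child_ins B a : good B a -> forall j,
  child ((y.1 :\ B) :|: [set z |: B]) j = (j == z) || child y.1 j.
Proof.
move=> [aB gB] j.
have Blt i : i \in B -> i < z.
  case: gB => [BP|[-> [az _]]]; first exact: hy_lt.
  by rewrite inE => /eqP ->.
have zB : z \notin B by apply/negP => /Blt; rewrite ltnn.
have B0 : B != set0 by apply/set0Pn; exists a.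
have zBP : z |: B \in (y.1 :\ B) :|: [set z |: B] by rewrite !inE eqxx orbT.
apply/exists_inP/idP => [[X /setUP[/setD1P[XB XP]|/set1P ->] /andP[jX mX]]|].
- by apply/orP; right; apply/exists_inP; exists X => //; rewrite jX.
- case/setU1P: jX mX => [->|jB]; first by rewrite eqxx.
  rewrite is_minU // => mj; apply/orP; right.
  case: gB => [BP|[BE _]]; first by apply/exists_inP; exists B => //; rewrite jB.
  by move: jB mj; rewrite BE inE => /eqP ->; rewrite is_min1.
case/orP => [/eqP ->|/exists_inP[X XP /andP[jX mX]]].
  exists (z |: B) => //; rewrite setU11 /= is_minU //.
  by apply/negP => /is_minP[]; rewrite (negbTE zB).
case: (eqVneq X B) => [XB|XB].
  by exists (z |: B) => //; rewrite is_minU // -XB mX; rewrite -XB in zB *; rewrite setU1r.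
by exists X; [rewrite !inE XB XP|rewrite jX].
Qed.

Lemma nch_ins B a : good B a -> nch ((y.1 :\ B) :|: [set z |: B]) = (nch y.1).+1.
Proof.
move=> g; rewrite /nch.
have -> : [set j | child ((y.1 :\ B) :|: [set z |: B]) j] = z |: [set j | child y.1 j].
  by apply/setP => j; rewrite !inE (child_ins g).
by rewrite cardsU1 inE (negbTE child_z).
Qed.

Lemma nch_ext ch : vch y ch -> nch (ext y ch).1 = if ch is Some _ then (nch y.1).+1 else nch y.1.
Proof.
case: ch => [[a b]|] /= H.
  by case: b H => H /=; [case: (Bpar_spec H) => g _|case: (Bown_spec H) => g _];
    exact: nch_ins g.
by rewrite /nch; apply: eq_card => j; rewrite !inE child_none.
Qed.


Lemma good_facts B a : good B a ->
  [/\ forall i, i \in B -> i < z, z \notin B, B != set0 &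
      cyclic_arrangement B (y.2 B)].
Proof.
move=> [aB gB].
have Blt i : i \in B -> i < z.
  case: gB => [BP|[-> [az _]]]; first exact: hy_lt.
  by rewrite inE => /eqP ->.
have zB : z \notin B by apply/negP => /Blt; rewrite ltnn.
split => //; first by apply/set0Pn; exists a.
case: gB => [|[-> [_ H]]]; first exact: hy_cyc.
rewrite hy_c1 ?cyc_le1 ?cards1 //.
by apply/negP => /H /(_ (set11 a)); rewrite is_min1.
Qed.

Lemma setU1D (x : T) (A : {set T}) : x \notin A -> (x |: A) :\ x = A.
Proof.
move=> xA; apply/setP => i; rewrite !inE; case: (eqVneq i x) => // ->.
by rewrite (negbTE xA).
Qed.

Lemma zb_none : zb (y.1 :|: [set [set z]]) = [set z].
Proof.
rewrite /zb (@pick_uniq _ _ [set z]) // => X; rewrite !inE.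
case: (eqVneq X [set z]) => [->|Xz]; first by rewrite set11 orbT.
by rewrite orbF; apply/negP => /andP[/hy_z/negP].
Qed.

Lemma zb_ins B a : good B a -> zb ((y.1 :\ B) :|: [set z |: B]) = z |: B.
Proof.
move=> g; rewrite /zb (@pick_uniq _ _ (z |: B)) // => X; rewrite !inE.
case: (eqVneq X (z |: B)) => [->|Xz]; first by rewrite setU11 orbT andbT.
by rewrite orbF; apply/negP => /andP[/andP[_ /hy_z/negP]].
Qed.

Lemma res_ins B a : good B a -> res (ins y B a) = y.
Proof.
move=> g; case: (good_facts g) => Blt zB B0 cycB.
case: (g) => aB gB.
rewrite /res /ins /= (zb_ins g) setU1D //.
have zBP : z |: B \notin y.1 by apply/negP => /hy_z; rewrite setU11.
have -> : ((y.1 :\ B) :|: [set z |: B]) :\ (z |: B) = y.1 :\ B.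
  apply/setP => X; rewrite !inE; case: (eqVneq X (z |: B)) => [->|] /=.
    by rewrite (negbTE zBP) andbF.
  by rewrite orbF.
have keep : (1 < #|B|) || ~~ (B \subset \bigcup_(X in y.1 :\ B) X) = (B \in y.1).
  case: gB => [BP|[BE [az H]]].
    rewrite BP; case: ltnP => //= cB.
    have BE : B = [set a].
      apply/setP => i; rewrite inE; apply/idP/eqP => [iB|->//].
      by move/card_le1_eqP: cB => /(_ i a iB aB).
    apply/negP => /subsetP /(_ a aB) /bigcupP[W /setD1P[WB WP] aW].
    have BW : B != W by rewrite eq_sym.
    by have := hy_nd BP WP BW; rewrite BE => /nd_single; apply.
  rewrite BE cards1 /=.
  have -> : [set a] \in y.1 = false.
    by apply/negP => /H /(_ (set11 a)); rewrite is_min1.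
  apply/subsetP => i /set1P ->; case: (hy_cov az) => W WP aW.
  apply/bigcupP; exists W => //; rewrite !inE WP andbT.
  by apply/eqP => WE; move: (H W WP aW); rewrite WE is_min1.
rewrite keep [RHS]surjective_pairing /=.
congr pair.
  apply/setP => X; rewrite !inE; case: (eqVneq X B) => [->|XB] /=.
    by case: ifP; rewrite ?inE ?eqxx ?in_set0.
  by case: ifP; rewrite ?inE ?(negbTE XB) ?in_set0 ?orbF.
apply/ffunP => X; rewrite !ffunE eqxx.
case: (eqVneq X B) => [->|XB].
  have -> : (y.2 B * tperm z (y.2 B a))%g z = y.2 B a.
    by rewrite permM; case/cycP: cycB => H1 _; rewrite /= (H1 z zB) tpermL.
  by rewrite -mulgA tperm2 mulg1.
case: (eqVneq X (z |: B)) => [->|XzB] //=.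
by move: (hy_c1 zBP) => /= ->.
Qed.

Lemma res_ext ch : vch y ch -> res (ext y ch) = y.
Proof.
case: ch => [[a b]|] H.
  rewrite /ext; case: b H => H; apply: res_ins.
    by case: (Bpar_spec H).
  by case: (Bown_spec H).
have zP : [set z] \notin y.1 by apply/negP => /hy_z; rewrite set11.
rewrite /res /ext /= zb_none.
have -> : [set z] :\ z = set0 by apply/setP => i; rewrite !inE; case: eqP.
rewrite cards0 sub0set /=.
rewrite [RHS]surjective_pairing /=; congr pair.
  apply/setP => X; rewrite !inE; case: (eqVneq X [set z]) => [->|] /=.
    by rewrite (negbTE zP).
  by rewrite !orbF.
apply/ffunP => X; rewrite !ffunE.
have c0 : y.2 set0 = 1%g.
  move: (@hy_c1 set0); apply; by case/lckP: hy.
have cz : y.2 [set z] = 1%g by move: (hy_c1 zP).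
case: (eqVneq X set0) => [->|X0]; first by rewrite cz perm1 tperm1 mulg1 c0.
by case: (eqVneq X [set z]) => [->|].
Qed.


Definition sel (b : bool) a := if b then Bpar y.1 a else Bown y.1 a.

Lemma sel_spec a b : vch y (Some (a, b)) -> good (sel b a) a /\ is_min a (sel b a) = ~~ b.
Proof.
rewrite /sel; case: b => /= H.
  by case: (Bpar_spec H) => g /negbTE.
by case: (Bown_spec H).
Qed.

Lemma ext_inj ch1 ch2 : vch y ch1 -> vch y ch2 -> ext y ch1 = ext y ch2 -> ch1 = ch2.
Proof.
have zbE ch : vch y ch -> zb (ext y ch).1 =
   if ch is Some (a, b) then z |: sel b a else [set z].
  case: ch => [[a b]|] H; last exact: zb_none.
  by case: (sel_spec H) => g _; rewrite /ext -/(sel b a) (zb_ins g).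
have noz a b : vch y (Some (a, b)) -> z |: sel b a != [set z].
  move=> H; case: (sel_spec H) => g _; case: (good_facts g) => _ zB _ _.
  case: g => aB _; apply/negP => /eqP/setP/(_ a); rewrite !inE aB orbT => /esym/eqP az.
  by rewrite -az aB in zB.
case: ch1 => [[a1 b1]|] H1; case: ch2 => [[a2 b2]|] H2 E //.
- have E1 : z |: sel b1 a1 = z |: sel b2 a2 by rewrite -(zbE _ H1) -(zbE _ H2) E.
  case: (sel_spec H1) => g1 m1; case: (sel_spec H2) => g2 m2.
  case: (good_facts g1) => _ zB1 _ _; case: (good_facts g2) => _ zB2 _ _.
  have EB : sel b1 a1 = sel b2 a2 by rewrite -(setU1D zB1) E1 setU1D.
  have := congr1 (fun y' : Y => y'.2 (z |: sel b1 a1)) E.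
  rewrite /ext -/(sel b1 a1) -/(sel b2 a2) /ins /= !ffunE -EB eqxx.
  move/mulgI => /(congr1 (fun t : {perm T} => t z)); rewrite !tpermL => /perm_inj a12.
  subst a2; congr (Some (_, _)).
  by apply/eqP; rewrite -(inj_eq negb_inj) -m1 -m2 EB.
- by move: (zbE _ H1); rewrite E (zbE _ H2) => /esym/eqP; rewrite (negbTE (noz _ _ H1)).
- by move: (zbE _ H2); rewrite -E (zbE _ H1) => /esym/eqP; rewrite (negbTE (noz _ _ H2)).
Qed.

End Valid.

Lemma cyc_small B s : #|B| <= 1 -> cyclic_arrangement B s -> s = 1%g.
Proof.
move=> cB cyc; apply/permP => x; rewrite perm1.
case: (boolP (x \in B)) => xB; last by case/cycP: cyc => H _; apply: H.
by move/card_le1_eqP: cB; apply => //; apply: cyc_stable cyc xB.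
Qed.

Section Res.
Variable y' : Y.
Hypothesis hy' : lck k.+1 y'.

Lemma h'_lt B i : B \in y'.1 -> i \in B -> i <= z.
Proof. by case/lckP: hy' => _ H _ _ _; apply: H. Qed.

Lemma h'_0 B : B \in y'.1 -> B != set0.
Proof. by case/lckP: hy' => H _ _ _ _ BP; apply: contraNneq H => <-. Qed.

Lemma h'_nd E F : E \in y'.1 -> F \in y'.1 -> E != F -> nearly_disjoint E F.
Proof. by case/lckP: hy' => _ _ _ H _; apply: H. Qed.

Lemma h'_cov i : i < k.+1 -> exists2 B, B \in y'.1 & i \in B.
Proof. by case/lckP: hy' => _ _ H _ _; apply: H. Qed.

Lemma h'_c B : if B \in y'.1 then is_true (cyclic_arrangement B (y'.2 B)) else y'.2 B = 1%g.
Proof. by case/lckP: hy' => _ _ _ _ H; apply: H. Qed.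

Lemma h'_cyc B : B \in y'.1 -> cyclic_arrangement B (y'.2 B).
Proof. by move=> BP; move: (h'_c B); rewrite BP. Qed.

Lemma h'_c1 B : B \notin y'.1 -> y'.2 B = 1%g.
Proof. by move=> BP; move: (h'_c B); rewrite (negbTE BP). Qed.

Lemma h'_zmin X : X \in y'.1 -> is_min z X -> #|X| <= 1.
Proof.
move=> XP /is_minP[zX H]; apply/card_le1_eqP => i j iX jX.
have ei : i = z by apply/val_inj/anti_leq; rewrite (h'_lt XP iX) H.
have ej : j = z by apply/val_inj/anti_leq; rewrite (h'_lt XP jX) H.
by rewrite ei ej.
Qed.

Lemma h'_zuniq X W : X \in y'.1 -> W \in y'.1 -> z \in X -> z \in W -> X = W.
Proof.
move=> XP WP zX zW; apply/eqP; apply: contraT => XW.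
move/ndP: (h'_nd XP WP XW) => /(_ z zX zW).
case/orP => /and3P[mz c1 _]; [move: (h'_zmin XP mz)|move: (h'_zmin WP mz)];
  by rewrite leqNgt c1.
Qed.

Definition B' := zb y'.1.
Definition Bm := B' :\ z.

Lemma B'P : B' \in y'.1 /\ z \in B'.
Proof.
case: (h'_cov (ltnSn k)) => X XP zX.
rewrite /B' /zb (@pick_uniq _ _ X) //= => W; apply/andP/eqP => [[WP zW]|->//].
exact: h'_zuniq.
Qed.

Lemma B'_only X : X \in y'.1 -> z \in X -> X = B'.
Proof. by case: B'P => BP zB XP zX; apply: h'_zuniq. Qed.

Lemma Bm_lt i : i \in Bm -> i < z.
Proof.
rewrite !inE => /andP[iz iB]; case: B'P => BP _.
rewrite ltn_neqAle (h'_lt BP iB) andbT; apply: contra iz => /eqP e; apply/eqP; exact: val_inj e.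
Qed.

Lemma other_lt X i : X \in y'.1 -> X != B' -> i \in X -> i < z.
Proof.
move=> XP XB iX; rewrite ltn_neqAle (h'_lt XP iX) andbT.
apply/negP => /eqP e; have iz : i = z by apply: val_inj.
by rewrite iz in iX; rewrite (B'_only XP iX) eqxx in XB.
Qed.

Lemma B'E : B' = z |: Bm.
Proof. by case: B'P => _ zB; rewrite setD1K. Qed.

Lemma zBm : z \notin Bm.
Proof. by rewrite !inE eqxx. Qed.

Lemma isminB' i : Bm != set0 -> is_min i B' = is_min i Bm.
Proof. by move=> B0; rewrite B'E is_minU //; apply: Bm_lt. Qed.

Lemma Bm_notin : Bm \notin y'.1.
Proof.
apply/negP => BP; have B0 := h'_0 BP.
case: (is_min_ex B0) => m mB.
have BB : Bm != B' by apply/eqP => e; move: zBm; rewrite e; case: B'P => _ ->.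
case: B'P => BP' _.
by apply: (nd_min2 (h'_nd BP BP' BB) mB); rewrite isminB'.
Qed.

Definition keep := (1 < #|Bm|) || ~~ (Bm \subset \bigcup_(X in y'.1 :\ B') X).

Lemma res1E : (res y').1 = (y'.1 :\ B') :|: (if keep then [set Bm] else set0).
Proof. by []. Qed.

Lemma res2E X : (res y').2 X = if X == Bm then (y'.2 B' * tperm z (y'.2 B' z))%g
              else if X == B' then 1%g else y'.2 X.
Proof. by rewrite /res ffunE. Qed.

Lemma keep0 : keep -> Bm != set0.
Proof. by rewrite /keep; apply: contraTneq => ->; rewrite cards0 sub0set. Qed.

Lemma keep_big i X : keep -> i \in Bm -> X \in y'.1 -> X != B' -> i \in X -> 1 < #|Bm|.
Proof.
move=> + iB XP XB iX; rewrite /keep; case: ltnP => //= cB /negP []. 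
apply/subsetP => j jB; have -> : j = i by move/card_le1_eqP: cB; apply.
by apply/bigcupP; exists X => //; rewrite !inE XB XP.
Qed.


Lemma s'cyc : cyclic_arrangement B' (y'.2 B').
Proof. by case: B'P => BP _; apply: h'_cyc. Qed.

Lemma resc_cyc : cyclic_arrangement Bm (y'.2 B' * tperm z (y'.2 B' z))%g.
Proof. by apply: cyc_rem; [apply: s'cyc|case: B'P]. Qed.

Lemma res_valid : lck k (res y').
Proof.
case: B'P => BP zB.
apply/lckP; split; rewrite res1E.
- apply/negP => /setUP[/setD1P[_ /h'_0/eqP //]|].
  by case: ifP => [kp /set1P e|]; [move: (keep0 kp); rewrite -e eqxx|rewrite in_set0].
- move=> X i /setUP[/setD1P[XB XP] iX|]; first exact: other_lt XB iX.
  by case: ifP => _; [move/set1P -> => /Bm_lt|rewrite in_set0].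
- move=> i ik; case: (h'_cov (ltnW ik)) => X XP iX.
  case: (eqVneq X B') => [XB|XB]; last by exists X => //; rewrite !inE XB XP.
  have iB : i \in Bm by rewrite !inE -XB iX andbT; apply: contraTneq ik => ->; rewrite ltnn.
  case kp: keep; first by exists Bm => //; rewrite !inE eqxx orbT.
  move/negbT: kp; rewrite /keep negb_or => /andP[_]; rewrite negbK => /subsetP /(_ i iB).
  by case/bigcupP => W WP iW; exists W => //; rewrite inE WP.
- have ndB X : keep -> X \in y'.1 -> X != B' -> nearly_disjoint Bm X.
    move=> kp XP XB; apply/ndP => i iB iX.
    have B0 := keep0 kp.
    have B'X : B' != X by rewrite eq_sym.
    move/ndP: (h'_nd BP XP B'X) => /(_ i _ iX).
    rewrite !isminB' //; have -> : i \in B' by rewrite B'E setU1r.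
    move/(_ isT); rewrite (keep_big kp iB XP XB iX).
    case/orP => /and3P[h1 h2 h3]; apply/orP; [left|right]; by rewrite h1 h3 ?h2.
  have KP X : X \in (if keep then [set Bm] else set0) -> keep /\ X = Bm.
    by case: ifP => kp; rewrite ?inE // => /eqP.
  move=> E F /setUP[/setD1P[EB EP]|/KP[kp ->]] /setUP[/setD1P[FB FP]|/KP[kp' ->]] EF.
  + exact: h'_nd.
  + by rewrite nd_sym; apply: ndB.
  + exact: ndB.
  + by rewrite eqxx in EF.
- move=> X; rewrite res2E.
  case: (eqVneq X Bm) => [->|XB].
    case kp: keep; first by rewrite !inE eqxx orbT; apply: resc_cyc.
    rewrite !inE (negbTE Bm_notin) andbF /=; apply: cyc_small resc_cyc.
    by move: kp; rewrite /keep; case: ltnP.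
  case: (eqVneq X B') => [->|XB'].
    have B'B : B' != Bm by apply: contraNneq zBm => <-.
    by rewrite !inE eqxx /=; case: keep; rewrite ?inE ?(negbTE B'B).
  rewrite !inE XB' /=; case: keep; rewrite ?inE ?(negbTE XB) ?orbF; exact: h'_c.
Qed.


Lemma res1P X : X \in (res y').1 -> (X \in y'.1 /\ X != B') \/ (keep /\ X = Bm).
Proof.
rewrite res1E => /setUP[/setD1P[XB XP]|]; first by left.
by case: ifP => kp; rewrite ?inE // => /eqP; right.
Qed.

Lemma Bown_res m : is_min m Bm -> Bown (res y').1 m = Bm.
Proof.
move=> mB; have B0 : Bm != set0 by apply/set0Pn; exists m; case/is_minP: mB.
case: B'P => BP _.
have noX X : X \in y'.1 -> X != B' -> is_min m X -> False.
  move=> XP XB mX; apply: (nd_min2 (h'_nd XP BP XB) mX); by rewrite isminB'.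
rewrite /Bown; case: pickP => [X /andP[/res1P[[XP XB]|[_ ->//]] mX]|H] /=.
  by case: (noX X XP XB mX).
case kp: keep.
  have Bin : Bm \in (res y').1 by rewrite res1E kp !inE eqxx orbT.
  by move: (H Bm); rewrite /= Bin mB.
move: kp; rewrite /keep; case: ltnP => //= cB _.
apply/setP => i; rewrite inE; apply/eqP/idP => [->|iB]; first by case/is_minP: mB.
by move/card_le1_eqP: cB; apply => //; case/is_minP: mB.
Qed.

Lemma Bpar_res a : keep -> a \in Bm -> ~~ is_min a Bm -> Bpar (res y').1 a = Bm.
Proof.
move=> kp aB am; case: B'P => BP _.
have B0 := keep0 kp.
rewrite /Bpar (@pick_uniq _ _ Bm) // => X; apply/idP/eqP => [|->].
  case/andP => /res1P[[XP XB]|[_ ->//]] /andP[aX aXm].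
  have aB' : a \in B' by rewrite B'E setU1r.
  move/ndP: (h'_nd XP BP XB) => /(_ a aX aB'); rewrite isminB' //.
  by rewrite (negbTE aXm) (negbTE am).
  have Bin : Bm \in (res y').1 by rewrite res1E kp !inE eqxx orbT.
by rewrite Bin aB am.
Qed.

Lemma ins_res a : a \in Bm -> y'.2 B' a = z -> ins (res y') Bm a = y'.
Proof.
move=> aB sa; case: B'P => BP zB.
rewrite /ins [RHS]surjective_pairing; congr pair.
  rewrite res1E -B'E; apply/setP => X; rewrite !inE.
  case: (eqVneq X B') => [->|XB]; first by rewrite BP orbT.
  case: (eqVneq X Bm) => [->|XBm] /=; first by rewrite (negbTE Bm_notin).
  by case: keep; rewrite ?inE ?(negbTE XBm) ?orbF.
apply/ffunP => X; rewrite ffunE -B'E !res2E eqxx.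
case: (eqVneq X B') => [->|XB].
  rewrite permM sa tpermL -mulgA tperm2 mulg1 //.
case: (eqVneq X Bm) => [->|XBm]; first by rewrite h'_c1 // Bm_notin.
by [].
Qed.

Lemma ext_res : exists2 ch, vch (res y') ch & ext (res y') ch = y'.
Proof.
case: B'P => BP zB.
case: (eqVneq Bm set0) => [B0|B0].
  have BE : B' = [set z] by rewrite B'E B0 setU0.
  have nk : keep = false by rewrite /keep B0 cards0 sub0set.
  exists None => //; rewrite /ext [RHS]surjective_pairing; congr pair.
    rewrite res1E nk setU0 -BE; apply/setP => X; rewrite !inE.
    by case: (eqVneq X B') => [->|] /=; rewrite ?BP ?orbT ?orbF.
  apply/ffunP => X; rewrite res2E.
  have s1 : y'.2 B' = 1%g by apply: cyc_small s'cyc; rewrite BE cards1.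
  case: (eqVneq X Bm) => [->|XB]; first by rewrite s1 perm1 tperm1 mulg1 h'_c1 // Bm_notin.
  by case: (eqVneq X B') => [->|] //; rewrite s1.
set s' := y'.2 B'; set a := (s'^-1)%g z.
have sa : s' a = z by rewrite permKV.
have aB' : a \in B'.
  apply: contraT => aB; case/cycP: s'cyc => H _.
  by move: (H a aB); rewrite sa => e; rewrite -e in aB; rewrite zB in aB.
have aB : a \in Bm.
  rewrite !inE aB' andbT; apply/eqP => az.
  case/set0Pn: B0 => m mB.
  have mB' : m \in B' by rewrite B'E setU1r.
  have zm : z != m by apply: contraNneq zBm => ->.
  by move: (cyc_fix s'cyc zB mB' zm); rewrite -{1}az sa eqxx.
case: (is_min_ex B0) => m mB.
case: (eqVneq a m) => [am|am].
  exists (Some (m, false)); first by rewrite /vch; apply: Bm_lt; case/is_minP: mB.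
  by rewrite /ext (Bown_res mB) -am ins_res.
have kp : keep.
  rewrite /keep; apply/orP; left.
  have mB1 : m \in Bm by case/is_minP: mB.
  have : #|[set a; m]| <= #|Bm|.
    by apply: subset_leq_card; apply/subsetP => x /set2P[] ->.
  by rewrite cards2 am.
have nam : ~~ is_min a Bm by apply: contra am => /(is_min_uniq mB) <-.
exists (Some (a, true)).
  rewrite /vch; apply/exists_inP; exists Bm; last by rewrite aB.
  by rewrite res1E kp !inE eqxx orbT.
by rewrite /ext (Bpar_res kp aB nam) ins_res.
Qed.

End Res.
End Ext.

Import GRing.Theory.

Section Count.
Variable n : nat.
Local Notation T := 'I_n.
Local Notation Y := ({set {set T}} * {ffun {set T} -> {perm T}})%type.

Lemma card_lt (z : T) : #|[set a : T | a < z]| = z.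
Proof.
have le : z <= n by apply: ltnW.
have -> : [set a : T | a < z] = widen_ord le @: [set: 'I_z].
  apply/setP => a; rewrite !inE; apply/idP/imsetP => [az|[i _ ->]]; last by rewrite /= ltn_ord.
  by exists (Ordinal az) => //; apply: val_inj.
rewrite card_imset ?cardsT ?card_ord //.
by move=> i j /(congr1 val) /= e; apply: val_inj.
Qed.

Lemma card_vch (z : T) (y : Y) : #|[set p : T * bool | vch z y (Some p)]| = z + nch y.1.
Proof.
have -> : [set p : T * bool | vch z y (Some p)] =
   [set (a, false) | a in [set a : T | a < z]] :|: [set (a, true) | a in [set a | child y.1 a]].
  apply/setP => -[a b]; rewrite !inE /=; apply/idP/orP => [H|].
    by case: b H => H; [right|left]; apply/imsetP; exists a; rewrite ?inE.
  by case=> /imsetP[a' Ha [-> ->]]; move: Ha; rewrite inE.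
rewrite cardsU.
have -> : [set (a, false) | a in [set a : T | a < z]] :&: [set (a, true) | a in [set a | child y.1 a]] = set0.
  by apply/setP => -[a b]; rewrite !inE; apply/andP => -[/imsetP[? _ [_ ->]] /imsetP[? _ [_]]].
rewrite cards0 subn0 !card_imset ?card_lt //.
  by move=> a b [].
by move=> a b [].
Qed.

Local Open Scope ring_scope.

Lemma step (z : T) :
  \sum_(y' : Y | lck z.+1 y') 'X^(nch y'.1) =
  \sum_(y : Y | lck z y) ('X^(nch y.1) + 'X^((nch y.1).+1) *+ (z + nch y.1)%N) :> {poly int}.
Proof.
rewrite (partition_big (res z) (lck z)) => [|y' hy']; last exact: res_valid.
apply: eq_bigr => y hy.
rewrite (eq_bigl (mem (ext z y @: [set ch | vch z y ch]))); last first.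
  move=> y'; rewrite /=; apply/andP/imsetP => [[hy' /eqP ry]|[ch]].
    case: (ext_res hy') => ch vc e; exists ch; last by rewrite -e ry.
    by rewrite inE -ry.
  rewrite inE => vc ->; split; first exact: ext_valid.
  by rewrite res_ext.
rewrite big_imset /=; last by move=> c1 c2; rewrite !inE; apply: ext_inj.
rewrite (bigD1 None) ?inE //; congr (_ + _); first by rewrite (@nch_ext _ z y hy None).
rewrite (eq_bigl (mem (Some @: [set p | vch z y (Some p)]))); last first.
  move=> ch; rewrite !inE; case: ch => [p|] /=.
    by rewrite andbT; apply/idP/imsetP => [H|[p' H [->]]]; [exists p; rewrite ?inE|rewrite inE in H].
  by apply/esym/negbTE; apply/imsetP => -[].
rewrite big_imset /=; last by move=> p1 p2 _ _ [].
rewrite (eq_bigr (fun _ => 'X^((nch y.1).+1))); last first.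
  by move=> p; rewrite inE => vc; rewrite (@nch_ext _ z y hy (Some p) vc).
by rewrite sumr_const card_vch.
Qed.

End Count.

Import GRing.Theory Num.Theory.

Local Open Scope ring_scope.

Fixpoint R (k : nat) : {poly int} :=
  if k is k'.+1 then R k' + 'X * R k' *+ k' + 'X^2 * (R k')^`() else 1.

Lemma deriv1 : (1 : {poly int})^`() = 0.
Proof. by rewrite -polyC1 derivC. Qed.

Lemma R1 : R 1 = 1.
Proof. by rewrite /= deriv1 mulr0 addr0 mulr0n addr0. Qed.

Lemma R2 : R 2 = 1 + 'X.
Proof. by rewrite /= -/(R 1) R1 deriv1 mulr0 addr0 mulr1n mulr1. Qed.

Lemma alg (A B C a b : {poly int}) (m : nat) :
  B = A + 'X * A *+ m + 'X^2 * a -> C = B + 'X * B *+ m.+1 + 'X^2 * b ->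
  C = 'X * B *+ (2 * m).+1 + A ->
  C + 'X * C *+ m.+2 + 'X^2 * ((B + 'X * b) *+ (2 * m).+1 + a) =
  'X * C *+ (2 * m.+1).+1 + B.
Proof.
move=> hB hC hI; apply/eqP; rewrite -subr_eq0.
have z1 : 'X^2 * a - (B - A - 'X * A *+ m) = 0 by rewrite hB; ring.
have z2 : 'X^2 * b - (C - B - 'X * B *+ m.+1) = 0 by rewrite hC; ring.
have z3 : C - ('X * B *+ (2 * m).+1 + A) = 0 by rewrite hI subrr.
have -> : C + 'X * C *+ m.+2 + 'X^2 * ((B + 'X * b) *+ (2 * m).+1 + a) -
  ('X * C *+ (2 * m.+1).+1 + B) =
  ('X^2 * a - (B - A - 'X * A *+ m)) + ('X *+ (2 * m).+1) * ('X^2 * b - (C - B - 'X * B *+ m.+1))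
  + (1 + 'X *+ m) * (C - ('X * B *+ (2 * m).+1 + A)) by ring.
by rewrite z1 z2 z3 !mulr0 !addr0.
Qed.

Lemma R_rec m : R m.+2 = 'X * R m.+1 *+ (2 * m).+1 + R m.
Proof.
elim: m => [|m IH].
  by rewrite R2 R1 /= mulr1n mulr1 addrC.
have dC : (R m.+2)^`() = (R m.+1 + 'X * (R m.+1)^`()) *+ (2 * m).+1 + (R m)^`().
  by rewrite IH derivD derivMn derivM derivX mul1r.
have hD : R m.+3 = R m.+2 + 'X * R m.+2 *+ m.+2 + 'X^2 * (R m.+2)^`() by [].
by rewrite hD dC; apply: alg.
Qed.


Section QS.
Variable n : nat.
Local Notation T := 'I_n.
Local Notation Y := ({set {set T}} * {ffun {set T} -> {perm T}})%type.

Definition Q k : {poly int} := \sum_(y : Y | lck k y) 'X^(nch y.1).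

Lemma lck0 (y : Y) : lck 0 y = (y == (set0, [ffun => 1%g])).
Proof.
apply/idP/eqP => [/lckP[H0 H1 H2 H3 H4]|->].
  have P0 : y.1 = set0.
    apply/setP => B; rewrite in_set0; apply/negP => BP.
    have : B != set0 by apply: contraNneq H0 => <-.
    by case/set0Pn => i /(H1 _ _ BP).
  rewrite [y]surjective_pairing P0; congr pair.
  by apply/ffunP => B; move: (H4 B); rewrite P0 in_set0 ffunE.
apply/lckP; split => /=.
- by rewrite in_set0.
- by move=> B i; rewrite in_set0.
- by move=> i; rewrite ltn0.
- by move=> E F; rewrite in_set0.
- by move=> B; rewrite in_set0 ffunE.
Qed.

Lemma Q0 : Q 0 = 1.
Proof.
rewrite /Q (big_pred1 (set0, [ffun => 1%g])); last by move=> y; rewrite lck0.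
have -> : nch (set0 : {set {set T}}) = 0%N.
  by apply/eqP; rewrite cards_eq0; apply/eqP/setP => j; rewrite !inE; apply/exists_inP => -[B]; rewrite in_set0.
by rewrite expr0.
Qed.

Lemma QS k (lt : (k < n)%N) : Q k.+1 = Q k + 'X * Q k *+ k + 'X^2 * (Q k)^`().
Proof.
have := step (Ordinal lt); rewrite /= -/(Q k.+1) => ->.
rewrite /Q raddf_sum mulr_sumr -sumrMnl mulr_sumr -!big_split /=.
apply: eq_bigr => y _; set c := nch y.1.
rewrite derivXn mulrnDr -exprS addrA; congr (_ + _).
case: c => [|c]; first by rewrite !mulr0n mulr0.
by rewrite mulrnAr -exprD.
Qed.

Lemma QR k : (k <= n)%N -> Q k = R k.
Proof.
elim: k => [|k IH] lt; first exact: Q0.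
by rewrite QS // IH ?(ltnW lt).
Qed.

End QS.

Lemma lc_card n : lc n = #|[set y | @lck n n y]|.
Proof.
rewrite /lc; apply: eq_card => y; rewrite !inE /linked_cycle /linked_partition /lck.
have -> : [set i : 'I_n | (i < n)%N] = [set: 'I_n] by apply/setP => i; rewrite !inE ltn_ord.
by rewrite -!andbA.
Qed.

Lemma lcR n : (R n).[1] = (lc n)%:R.
Proof.
rewrite -(QR (leqnn n)) /Q horner_sum.
rewrite (eq_bigr (fun _ => 1)) => [|y _]; last by rewrite hornerXn expr1n.
by rewrite sumr_const lc_card cardsE.
Qed.

Local Close Scope ring_scope.

Theorem theorem4p7 :
  lc 1 = 1 /\ lc 2 = 2 /\
  (forall n : nat, 3 <= n -> lc n = (2 * n - 3) * lc n.-1 + lc n.-2).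
Proof.
have key n : ((lc n)%:R = (R n).[1] :> int)%R by rewrite lcR.
split.
  apply/eqP; rewrite -(@eqr_nat int) key R1 hornerC //.
split.
  apply/eqP; rewrite -(@eqr_nat int) key R2 hornerD hornerC hornerX //.
case=> [|[|[|m]]] // _.
set k := m.+1.
have : ((lc k.+2)%:R = (lc k.+1)%:R *+ (2 * k).+1 + (lc k)%:R :> int)%R.
  by rewrite !key R_rec hornerD hornerMn hornerM hornerX mul1r.
move/eqP; rewrite -mulrnA -natrD eqr_nat => /eqP ->.
rewrite /= mulnC; congr (_ * _ + _).
by rewrite !mulnS.
Qed.
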